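(* In the setting described in the context (with $n$ sufficiently large), let $\kappa>0$ and let $\eta$ satisfy $0\le \eta\le \frac{1}{\sqrt n}$. Then any polytope $P\subseteq\mathbb{R}^{n+1}$ such that \[ P\subseteq K(\eta,\kappa)\subseteq \frac{n}{96\Delta^2\max\{\kappa,1\}}\,P \] has at least $\frac{m}{n}$ vertices.
   Context: Let $C_1$ be an absolute constant such that for every sufficiently large $n$ and every $2\le m\le \exp(n/C_1)$ there exist $y_1,\dots,y_m\in\mathbb{R}^n$ with $\frac12\sqrt n\le\|y_i\|\le 2\sqrt n$ and $|\langle y_i,y_j\rangle|\le C_1\sqrt{n\log m}$ for $i\ne j$. Let $C_2$ be an absolute constant such that for all unit vectors $v_1,\dots,v_m\in S^{n-1}$ and $X$ distributed as $N(0,I_n)$, uniformly on $\sqrt n S^{n-1}$, or uniformly on $\sqrt n B_2^n$, one has $\mathbb{P}(\max_{i}|\langle v_i,X\rangle|\ge C_2\sqrt{\log m})\le m^{-10}$. Set $C_0=\max(C_1,100C_2)$. Let $n$ be sufficiently large, $m$ an integer with $C_0 n\le m\le \exp(n/C_0)$, and $\Delta=C_0\sqrt{\log m}$. Let $x_1,\dots,x_m\in\mathbb{R}^n$ satisfy $\frac{\sqrt n}{2\Delta}\le\|x_i\|\le\frac{2\sqrt n}{\Delta}$ for all $i$ and $|\langle x_i,x_j\rangle|\le \frac{\sqrt n}{\Delta}$ for $i\ne j$. $B_2^n$ is the Euclidean unit ball. Define $Q=\operatorname{conv}\{\pm x_i\}$, $Q_1=\operatorname{conv}(Q\cup B_2^n)$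 and $Q_1^\circ=(Q_1)^\circ=Q^\circ\cap B_2^n$, where $L^\circ=\{y:\langle y,z\rangle\le1\ \forall z\in L\}$. Equip $\mathbb{R}^{n+1}$ with orthonormal basis $e_0,e_1,\dots,e_n$ and identify $\mathbb{R}^n$ with $\operatorname{span}\{e_1,\dots,e_n\}$. For $\eta\in\mathbb{R}$ and $\kappa>0$ set \[ K(\eta,\kappa)=\operatorname{conv}\big((1-\eta)e_0+Q,\ -\kappa\eta e_0+\kappa Q_1^\circ\big)\subseteq\mathbb{R}^{n+1}. \] *)

(* Defs.v *)
From HB Require Import structures.
From mathcomp Require Import all_boot all_order all_algebra.
From mathcomp Require Import all_classical all_reals all_analysis.
Set Implicit Arguments.
Unset Strict Implicit.
Unset Printing Implicit Defensive.
Import Order.TTheory GRing.Theory Num.Theory.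
Local Open Scope classical_set_scope.
Local Open Scope ring_scope.

Section Defs.
Context {R : realType}.

Definition dotv {n : nat} (u v : 'rV[R]_n) : R := \sum_(i < n) u 0 i * v 0 i.
Definition normv {n : nat} (u : 'rV[R]_n) : R := Num.sqrt (dotv u u).

Definition eball (n : nat) (r : R) : set 'rV[R]_n := [set x | normv x <= r].
Definition esphere (n : nat) (r : R) : set 'rV[R]_n := [set x | normv x = r].

Definition conv {n : nat} (A : set 'rV[R]_n) : set 'rV[R]_n :=
  [set x | exists (k : nat) (w : 'I_k -> R) (p : 'I_k -> 'rV[R]_n),
     (forall i, 0 <= w i) /\ \sum_(i < k) w i = 1 /\
     (forall i, A (p i)) /\ x = \sum_(i < k) w i *: p i].

Definition polar {n : nat} (L : set 'rV[R]_n) : set 'rV[R]_n :=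
  [set y | forall z, L z -> dotv y z <= 1].

Definition dil {n : nat} (t : R) (L : set 'rV[R]_n) : set 'rV[R]_n :=
  [set t *: z | z in L].

(** R^{n+1} with basis e_0, e_1, ..., e_n, R^n = span{e_1..e_n}:
    lift0 t y is the point t e_0 + y *)
Definition lift0 {n : nat} (t : R) (y : 'rV[R]_n) : 'rV[R]_n.+1 :=
  \row_(j < n.+1) (if unlift ord0 j is Some i then y 0 i else t).

Definition polytope {n : nat} (P : set 'rV[R]_n) : Prop :=
  exists V : seq 'rV[R]_n, P = conv [set` V].

(** vertices of a polytope = its extreme points *)
Definition extreme_point {n : nat} (P : set 'rV[R]_n) (p : 'rV[R]_n) : Prop :=
  P p /\ forall a b t, P a -> P b -> 0 < t < 1 ->
     p = (1 - t) *: a + t *: b -> a = p /\ b = p.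

Definition Qbody {n m : nat} (x : 'I_m -> 'rV[R]_n) : set 'rV[R]_n :=
  conv [set y | exists i, y = x i \/ y = - x i].
Definition Q1body {n m : nat} (x : 'I_m -> 'rV[R]_n) : set 'rV[R]_n :=
  conv (Qbody x `|` @eball n 1).
Definition Q1polar {n m : nat} (x : 'I_m -> 'rV[R]_n) : set 'rV[R]_n :=
  polar (Q1body x).

Definition Kbody {n m : nat} (x : 'I_m -> 'rV[R]_n) (eta kappa : R)
  : set 'rV[R]_n.+1 :=
  conv ([set lift0 (1 - eta) q | q in Qbody x] `|`
        [set lift0 (- (kappa * eta)) (kappa *: y) | y in Q1polar x]).

Local Open Scope ereal_scope.

Definition box_cover {n : nat} (E : set 'rV[R]_n) (a b : nat -> 'rV[R]_n) : Prop :=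
  (forall k (i : 'I_n), (a k 0 i <= b k 0 i)%R) /\
  (forall x, E x -> exists k, forall i : 'I_n, (a k 0 i <= x 0 i <= b k 0 i)%R).

Definition box_outer {n : nat} (w : 'rV[R]_n -> 'rV[R]_n -> R)
  (E : set 'rV[R]_n) : \bar R :=
  ereal_inf [set s | exists a b, box_cover E a b /\
                     s = \sum_(k <oo) (w (a k) (b k))%:E].

Definition leb_outer (n : nat) : set 'rV[R]_n -> \bar R :=
  box_outer (fun a b => \prod_(i < n) (b 0 i - a 0 i))%R.

Definition gauss_outer (n : nat) : set 'rV[R]_n -> \bar R :=
  box_outer (fun a b => \prod_(i < n) fine (normal_prob 0 1 `[a 0 i, b 0 i]%classic))%R.

Local Close Scope ereal_scope.

Definition gauss_prob (n : nat) (E : set 'rV[R]_n) : R := fine (@gauss_outer n E).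

Definition ball_prob (n : nat) (r : R) (E : set 'rV[R]_n) : R :=
  fine (@leb_outer n (E `&` @eball n r)) / fine (@leb_outer n (@eball n r)).

(** probability that X uniform (normalized surface measure) on r S^{n-1}
    lies in E: relative volume of the cone {t x : 0 < t <= 1, x in E ∩ rS} *)
Definition sphere_prob (n : nat) (r : R) (E : set 'rV[R]_n) : R :=
  fine (@leb_outer n [set t *: x | t in `]0, 1]%classic & x in E `&` @esphere n r])
  / fine (@leb_outer n (@eball n r)).

Definition C1_property (C1 : R) : Prop :=
  exists N : nat, forall n : nat, (N <= n)%N ->
  forall m : nat, (2 <= m)%N -> m%:R <= expR (n%:R / C1) ->
  exists y : 'I_m -> 'rV[R]_n,
    (forall i, Num.sqrt n%:R / 2 <= normv (y i) <= 2 * Num.sqrt n%:R) /\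
    (forall i j, i != j -> `|dotv (y i) (y j)| <= C1 * Num.sqrt (n%:R * ln m%:R)).

Definition C2_property (C2 : R) : Prop :=
  forall n m : nat, (1 <= n)%N -> (1 <= m)%N ->
  forall v : 'I_m -> 'rV[R]_n, (forall i, normv (v i) = 1) ->
  let E := [set X : 'rV[R]_n | exists i, C2 * Num.sqrt (ln m%:R) <= `|dotv (v i) X|] in
  [/\ gauss_prob E <= m%:R ^- 10,
      sphere_prob (Num.sqrt n%:R) E <= m%:R ^- 10 &
      ball_prob (Num.sqrt n%:R) E <= m%:R ^- 10].

End Defs.

Arguments eball {R} n r.
Arguments esphere {R} n r.
Arguments leb_outer {R} n.
Arguments gauss_outer {R} n.
Arguments gauss_prob {R} n.
Arguments ball_prob {R} n.
Arguments sphere_prob {R} n.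

(* Main.v *)
Require Import Defs.
From HB Require Import structures.
From mathcomp Require Import all_boot all_order all_algebra.
From mathcomp Require Import all_classical all_reals all_analysis.
From mathcomp Require Import ring lra.
Import Order.TTheory GRing.Theory Num.Theory.
Local Open Scope classical_set_scope.
Local Open Scope ring_scope.

Section Aux.
Variable R : realType.

Lemma dotvC n (u v : 'rV[R]_n) : dotv u v = dotv v u.
Proof. by apply: eq_bigr => i _; rewrite mulrC. Qed.

Lemma dotvDl n (u v w : 'rV[R]_n) : dotv (u + v) w = dotv u w + dotv v w.
Proof. rewrite /dotv -big_split /=; apply: eq_bigr => i _; by rewrite mxE mulrDl. Qed.

Lemma dotvZl n a (u w : 'rV[R]_n) : dotv (a *: u) w = a * dotv u w.
Proof. rewrite /dotv mulr_sumr; apply: eq_bigr => i _; by rewrite mxE mulrA. Qed.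

Lemma dotvNl n (u w : 'rV[R]_n) : dotv (- u) w = - dotv u w.
Proof. by rewrite -scaleN1r dotvZl mulN1r. Qed.

Lemma dotvDr n (u v w : 'rV[R]_n) : dotv w (u + v) = dotv w u + dotv w v.
Proof. by rewrite dotvC dotvDl; congr (_ + _); apply: dotvC. Qed.

Lemma dotvZr n a (u w : 'rV[R]_n) : dotv w (a *: u) = a * dotv w u.
Proof. by rewrite dotvC dotvZl dotvC. Qed.

Lemma dotvNr n (u w : 'rV[R]_n) : dotv w (- u) = - dotv w u.
Proof. by rewrite dotvC dotvNl dotvC. Qed.

Lemma dotv_sumZl n k (w : 'I_k -> R) (p : 'I_k -> 'rV[R]_n) g :
  dotv (\sum_(j < k) w j *: p j) g = \sum_(j < k) w j * dotv (p j) g.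
Proof.
rewrite /dotv.
under eq_bigr => i _ do rewrite summxE mulr_suml.
rewrite exchange_big /=; apply: eq_bigr => j _; rewrite mulr_sumr; apply: eq_bigr => i _.
by rewrite mxE mulrA.
Qed.

Lemma dotv_ge0 n (u : 'rV[R]_n) : 0 <= dotv u u.
Proof. by apply: sumr_ge0 => i _; rewrite -expr2 sqr_ge0. Qed.

Lemma dotv_eq0 n (u : 'rV[R]_n) : dotv u u = 0 -> u = 0.
Proof.
move=> H; apply/rowP => i; rewrite mxE.
have h : u 0 i * u 0 i = 0.
  by apply: (psumr_eq0P _ H) => // j _; rewrite -expr2 sqr_ge0.
by move/eqP: h; rewrite mulf_eq0 orbb => /eqP.
Qed.

Lemma dotv_lift0 n t s (y u : 'rV[R]_n) :
  dotv (Defs.lift0 t y) (Defs.lift0 s u) = t * s + dotv y u.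
Proof.
rewrite /dotv big_ord_recl !mxE unlift_none; congr (_ + _).
by apply: eq_bigr => j _; rewrite !mxE liftK.
Qed.


Lemma conv_mem n (S : set 'rV[R]_n) a : S a -> Defs.conv S a.
Proof.
move=> Aa; exists 1%N, (fun _ => 1), (fun _ => a); split; first by move=> _; exact: ler01.
by rewrite !big_ord1 scale1r.
Qed.

Lemma cert_conv d m (g : 'I_m -> 'rV[R]_d) (h : 'I_m -> R) (rho : 'I_m -> R) B
  (S : set 'rV[R]_d) :
  (forall z, S z -> exists A : 'I_m -> R, (forall i, 0 <= A i) /\ \sum_i A i <= 1 /\
      forall i, dotv z (g i) - h i <= A i * rho i + B) ->
  forall z, Defs.conv S z -> exists A : 'I_m -> R, (forall i, 0 <= A i) /\ \sum_i A i <= 1 /\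
      forall i, dotv z (g i) - h i <= A i * rho i + B.
Proof.
move=> hS z [k [w [p [w0 [w1 [Sp ->]]]]]].
have /choice [Af hAf] : forall j : 'I_k, exists A : 'I_m -> R,
   (forall i, 0 <= A i) /\ \sum_i A i <= 1 /\
      forall i, dotv (p j) (g i) - h i <= A i * rho i + B by move=> j; exact: hS.
exists (fun i => \sum_j w j * Af j i); split; [|split].
- by move=> i; apply: sumr_ge0 => j _; apply: mulr_ge0 => //; exact: (hAf j).1.
- rewrite exchange_big /= -w1; apply: ler_sum => j _; rewrite -mulr_sumr.
  rewrite -[X in _ <= X]mulr1; apply: ler_wpM2l => //; exact: (hAf j).2.1.
- move=> i; rewrite dotv_sumZl.
  have -> : \sum_(j < k) w j * dotv (p j) (g i) - h i =
            \sum_(j < k) w j * (dotv (p j) (g i) - h i).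
    by rewrite -{1}[h i]mul1r -w1 mulr_suml -sumrB; apply: eq_bigr => j _; rewrite mulrBr.
  have -> : (\sum_j w j * Af j i) * rho i + B = \sum_(j < k) w j * (Af j i * rho i + B).
    by rewrite -{1}[B]mul1r -w1 mulr_suml mulr_suml -big_split; apply: eq_bigr => j _; rewrite mulrDr mulrA.
  apply: ler_sum => j _; apply: ler_wpM2l => //; exact: (hAf j).2.2 i.
Qed.

Lemma lexmax (T : eqType) (f N : T -> R) (V : seq T) (v0 : T) : v0 \in V ->
  exists v, v \in V /\ forall u, u \in V -> f u < f v \/ (f u = f v /\ N u <= N v).
Proof.
elim: V v0 => [//|a V IH] v0 _.
case: V IH => [|b V] IH.
  exists a; split; first exact: mem_head.
  by move=> u; rewrite inE => /eqP ->; right.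
have [v [vin hv]] := IH b (mem_head b V).
have hin : forall u, u \in [:: a, b & V] -> u = a \/ u \in b :: V.
  by move=> u; rewrite inE => /orP [/eqP ->|]; [left|right].
case: (ltrgtP (f a) (f v)) => hav.
- exists v; split; first by rewrite inE vin orbT.
  by move=> u /hin [->|]; [left|exact: hv].
- exists a; split; first exact: mem_head.
  move=> u /hin [->|/hv [h|[h _]]]; [by right|left; exact: lt_trans hav|left; by rewrite h].
- case: (lerP (N a) (N v)) => hN.
  + exists v; split; first by rewrite inE vin orbT.
    by move=> u /hin [->|]; [right|exact: hv].
  + exists a; split; first exact: mem_head.
    move=> u /hin [->|/hv [h|[h1 h2]]]; [by right|left; by rewrite hav|right].
    by rewrite h1 hav; split => //; exact: (le_trans h2 (ltW hN)).
Qed.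


Lemma dotv_sub2 n (a b : 'rV[R]_n) :
  dotv (a - b) (a - b) = dotv a a - 2 * dotv a b + dotv b b.
Proof.
rewrite dotvDl !dotvDr !dotvNl !dotvNr (dotvC _ b a); ring.
Qed.

Lemma conv2_eq (t x y z : R) : 0 < t -> t < 1 -> x <= z -> y <= z ->
  z = (1 - t) * x + t * y -> x = z /\ y = z.
Proof.
move=> t0 t1 hx hy e.
have h1 : 0 <= (1 - t) * (z - x) by apply: mulr_ge0; lra.
have h2 : 0 <= t * (z - y) by apply: mulr_ge0; lra.
have h3 : (1 - t) * (z - x) + t * (z - y) = 0 by rewrite e; ring.
have h4 : (1 - t) * (z - x) = 0 by lra.
have h5 : t * (z - y) = 0 by lra.
move/eqP: h4; rewrite mulf_eq0 => /orP [/eqP|/eqP]; first lra.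
move/eqP: h5; rewrite mulf_eq0 => /orP [/eqP|/eqP]; lra.
Qed.

Lemma conv_fle d (V : seq 'rV[R]_d) g v :
  (forall u, u \in V -> dotv u g <= dotv v g) ->
  forall a, Defs.conv [set` V] a -> dotv a g <= dotv v g.
Proof.
move=> hV a [k [w [p [w0 [w1 [Sp ->]]]]]].
rewrite dotv_sumZl -[X in _ <= X]mul1r -w1 mulr_suml.
by apply: ler_sum => j _; apply: ler_wpM2l => //; exact: (hV _ (Sp j)).
Qed.

Lemma ext_max d (V : seq 'rV[R]_d) g z : Defs.conv [set` V] z ->
  exists v, extreme_point (Defs.conv [set` V]) v /\ dotv z g <= dotv v g.
Proof.
move=> hz.
have [v0 v0in] : exists v0, v0 \in V.
  case: hz => [[|k] [w [p [w0 [w1 [Sp _]]]]]].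
    by move: w1; rewrite big_ord0 => /eqP; rewrite eq_sym oner_eq0.
  by exists (p ord0); exact: Sp.
pose f (u : 'rV[R]_d) := dotv u g; pose N (u : 'rV[R]_d) := dotv u u.
have [v [vin hv]] := lexmax _ f N V v0 v0in.
have fle : forall u, u \in V -> f u <= f v.
  by move=> u /hv [h|[h _]]; [exact: ltW|rewrite h].
have cfle := conv_fle _ V g v fle.
have vP : Defs.conv [set` V] v by apply: conv_mem; exact: vin.
have cN : forall a, Defs.conv [set` V] a -> f a = f v -> N a <= N v.
  move=> a ha hfa; move: (ha) => [k [w [p [w0 [w1 [Sp ea]]]]]].
  have hsum : \sum_(j < k) w j * (f v - f (p j)) = 0.
    rewrite (eq_bigr (fun j => w j * f v - w j * f (p j))); last by move=> j _; rewrite mulrBr.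
    rewrite sumrB -mulr_suml w1 mul1r /f -dotv_sumZl -ea.
    by move: hfa; rewrite /f => ->; rewrite subrr.
  have hj : forall j, w j * dotv (p j) a <= w j * ((N v + N a) / 2).
    move=> j.
    have hw : w j * (f v - f (p j)) = 0.
      apply: (psumr_eq0P _ hsum) => // i _; apply: mulr_ge0 => //.
      by rewrite subr_ge0; apply: fle; exact: Sp.
    move/eqP: hw; rewrite mulf_eq0 => /orP [/eqP ->|]; first by rewrite !mul0r.
    rewrite subr_eq0 => /eqP hfp.
    apply: ler_wpM2l => //.
    have hNp : N (p j) <= N v.
      case: (hv (p j) (Sp j)) => [h|[_ h]] //.
      by move: h; rewrite hfp ltxx.
    have := dotv_ge0 _ (p j - a); rewrite dotv_sub2 -/(N (p j)) -/(N a) => ?.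
    lra.
  have : N a <= (N v + N a) / 2.
    have -> : (N v + N a) / 2 = \sum_(j < k) w j * ((N v + N a) / 2).
      by rewrite -mulr_suml w1 mul1r.
    rewrite {1}/N {1}ea dotv_sumZl.
    by apply: ler_sum => j _; exact: hj.
  lra.
exists v; split; last exact: cfle z hz.
split => // a b t ha hb /andP [t0 t1] hvab.
have hfa : f a <= f v := cfle a ha. have hfb : f b <= f v := cfle b hb.
have efv : f v = (1 - t) * f a + t * f b by rewrite /f hvab dotvDl !dotvZl.
have [hfa' hfb'] := conv2_eq _ _ _ _ t0 t1 hfa hfb efv.
have hNa := cN a ha hfa'; have hNb := cN b hb hfb'.
have eNv : N v = (1 - t) ^+ 2 * N a + 2 * t * (1 - t) * dotv a b + t ^+ 2 * N b.
  rewrite /N hvab dotvDl !dotvDr !dotvZl !dotvZr (dotvC _ b a); ring.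
have hD := dotv_ge0 _ (a - b); rewrite dotv_sub2 -/(N a) -/(N b) in hD.
have h1 : (1 - t) * N a <= (1 - t) * N v by apply: ler_wpM2l => //; lra.
have h2 : t * N b <= t * N v by apply: ler_wpM2l => //; lra.
have h3 : t * (1 - t) * (N a - 2 * dotv a b + N b) <= 0.
  have -> : t * (1 - t) * (N a - 2 * dotv a b + N b) = (1 - t) * N a + t * N b - N v.
    by rewrite eNv; ring.
  lra.
have h4 : N a - 2 * dotv a b + N b = 0.
  apply/eqP; rewrite eq_le; apply/andP; split; last by [].
  have ht : 0 < t * (1 - t) by apply: mulr_gt0; lra.
  by rewrite -(pmulr_rle0 _ ht).
have eab : a = b.
  apply/eqP; rewrite -subr_eq0; apply/eqP; apply: dotv_eq0.
  by rewrite dotv_sub2.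
subst b.
have -> : v = a by rewrite hvab -scalerDl subrK scale1r.
by [].
Qed.


Lemma core n m (x : 'I_m -> 'rV[R]_n) (eta kappa c B lam s : R) (V : seq 'rV[R]_n.+1) :
  (0 < n)%N -> 0 < lam -> 0 <= kappa ->
  (forall i, 0 < dotv (x i) (x i)) ->
  (forall i k, i != k -> `|dotv (x k) (x i)| <= s) ->
  s - c * (1 - eta) <= B -> - (c * (1 - eta)) <= B -> kappa * eta * c + kappa <= B ->
  (forall i, B + dotv (x i) (x i) / n%:R <= (dotv (x i) (x i) - c * (1 - eta)) / lam) ->
  Defs.conv [set` V] `<=` Kbody x eta kappa ->
  Kbody x eta kappa `<=` dil lam (Defs.conv [set` V]) ->
  exists W : seq 'rV[R]_n.+1, [/\ uniq W,
    (forall w, w \in W -> extreme_point (Defs.conv [set` V]) w) &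
    m%:R / n%:R <= (size W)%:R :> R].
Proof.
move=> n0 hlam hk hpos hdot hsB h0 hb hmain hPK hKP.
pose rho i := dotv (x i) (x i).
pose g i := Defs.lift0 (- c) (x i).
have xQ1 : forall i, Q1body x (x i).
  by move=> i; apply: conv_mem; left; apply: conv_mem; exists i; left.
have Qc : forall q, Qbody x q -> exists A : 'I_m -> R, (forall i, 0 <= A i) /\
    \sum_i A i <= 1 /\ forall i, dotv q (x i) - c * (1 - eta) <= A i * rho i + B.
  apply: (cert_conv _ _ x (fun _ => c * (1 - eta)) rho B).
  move=> y [k [-> | ->]].
  + exists (fun i => (i == k)%:R); split; [by move=> i; rewrite ler0n | split].
    * by rewrite (bigD1 k) //= eqxx big1 ?addr0 // => i /negPf ->.
    * move=> i; case: (eqVneq i k) => [->|hik]; first by rewrite ?eqxx mul1r /rho; lra.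
      rewrite ?(negPf hik) mul0r add0r.
      have := hdot i k hik; have := ler_norm (dotv (x k) (x i)); lra.
  + exists (fun _ => 0); split; [by []|split; first by rewrite big1].
    move=> i; rewrite mul0r add0r dotvNl; case: (eqVneq i k) => [->|hik].
      by have := hpos k; rewrite /rho; lra.
    have := hdot i k hik; have := ler_norm (- dotv (x k) (x i)); rewrite normrN; lra.
have Kc : forall z, Kbody x eta kappa z -> exists A : 'I_m -> R, (forall i, 0 <= A i) /\
    \sum_i A i <= 1 /\ forall i, dotv z (g i) - 0 <= A i * rho i + B.
  apply: (cert_conv _ _ g (fun _ => 0) rho B).
  move=> z [[q Qq <-] | [y Py <-]].
  + have [A [A0 [A1 hA]]] := Qc q Qq.
    exists A; do 2 split => //.
    by move=> i; rewrite dotv_lift0 subr0; have := hA i; lra.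
  + exists (fun _ => 0); split; [by []|split; first by rewrite big1].
    move=> i; rewrite mul0r add0r dotv_lift0 subr0 dotvZl.
    have := Py (x i) (xQ1 i); nra.
have /choice [Af hAf] : forall z, exists A : 'I_m -> R, Kbody x eta kappa z ->
    (forall i, 0 <= A i) /\ \sum_i A i <= 1 /\
    forall i, dotv z (g i) - 0 <= A i * rho i + B.
  move=> z; case: (pselect (Kbody x eta kappa z)) => hz.
    by have [A hA] := Kc z hz; exists A.
  by exists (fun _ => 0).
have hv : forall i, exists v, extreme_point (Defs.conv [set` V]) v /\ n%:R^-1 <= Af v i.
  move=> i.
  have Kp : Kbody x eta kappa (Defs.lift0 (1 - eta) (x i)).
    by apply: conv_mem; left; exists (x i) => //; apply: conv_mem; exists i; left.
  have [z Pz hz] := hKP _ Kp.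
  have [v [ve hzv]] := ext_max _ V (g i) z Pz.
  exists v; split => //.
  have Kv := hPK v ve.1.
  have [_ [_ hA]] := hAf v Kv.
  have hA' := hA i; rewrite subr0 in hA'.
  have ez : dotv z (g i) = (rho i - c * (1 - eta)) / lam.
    have e : lam * dotv z (g i) = rho i - c * (1 - eta).
      by rewrite -dotvZl hz dotv_lift0 /rho; ring.
    by rewrite -e mulrC mulKf // gt_eqF.
  have hm := hmain i.
  have h : n%:R^-1 * rho i <= Af v i * rho i.
    rewrite mulrC; rewrite -/(rho i) in hm; lra.
  by rewrite -(ler_pM2r (hpos i)).
have /choice [vf hvf] := hv.
exists (undup (map vf (enum 'I_m))); split.
- exact: undup_uniq.
- by move=> w; rewrite mem_undup => /mapP [i _ ->]; exact: (hvf i).1.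
set W := undup _.
have WK : forall w, w \in W -> Kbody x eta kappa w.
  by move=> w; rewrite mem_undup => /mapP [i _ ->]; apply: hPK; exact: (hvf i).1.1.
have e1 : m%:R / n%:R = \sum_(i < m) n%:R^-1 :> R.
  by rewrite sumr_const card_ord mulr_natl.
rewrite e1.
apply: (@le_trans _ _ (\sum_(i < m) Af (vf i) i)).
  by apply: ler_sum => i _; exact: (hvf i).2.
have e2 : \sum_(i < m) Af (vf i) i = \sum_(w <- W) \sum_(i < m) (vf i == w)%:R * Af w i.
  rewrite exchange_big /=; apply: eq_bigr => i _.
  rewrite (bigD1_seq (vf i)) /=; last exact: undup_uniq.
    rewrite eqxx mul1r big1 ?addr0 // => w hw.
    by rewrite eq_sym (negPf hw) mul0r.
  by rewrite mem_undup map_f ?mem_enum.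
rewrite e2 -sum1_size natr_sum !big_seq.
apply: ler_sum => w hw.
have [A0 [A1 _]] := hAf w (WK w hw).
apply: (le_trans _ A1).
apply: ler_sum => i _; case: (vf i == w); rewrite ?mul1r ?mul0r //.
Qed.


End Aux.
Theorem lemma3p6 (R : realType) (C1 C2 : R) :
  0 < C1 -> 0 < C2 -> C1_property C1 -> C2_property C2 ->
  let C0 := Num.max C1 (100 * C2) in
  exists N : nat, forall n : nat, (N <= n)%N ->
  forall m : nat, C0 * n%:R <= m%:R -> m%:R <= expR (n%:R / C0) ->
  let Delta := C0 * Num.sqrt (ln m%:R) in
  forall x : 'I_m -> 'rV[R]_n,
    (forall i, Num.sqrt n%:R / (2 * Delta) <= normv (x i) <= 2 * Num.sqrt n%:R / Delta) ->
    (forall i j, i != j -> `|dotv (x i) (x j)| <= Num.sqrt n%:R / Delta) ->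
  forall kappa eta : R, 0 < kappa -> 0 <= eta <= (Num.sqrt n%:R)^-1 ->
  forall P : set 'rV[R]_n.+1, polytope P ->
    P `<=` Kbody x eta kappa ->
    Kbody x eta kappa `<=` dil (n%:R / (96 * Delta ^+ 2 * Num.max kappa 1)) P ->
  exists W : seq 'rV[R]_n.+1,
    [/\ uniq W, (forall w, w \in W -> extreme_point P w) &
        m%:R / n%:R <= (size W)%:R :> R].
Proof.
move=> hC1 hC2 _ _ C0.
have C0pos : 0 < C0.
  have : C1 <= C0 by rewrite /C0 le_max lexx.
  exact: lt_le_trans.
have hb0 : 0 <= expR (C0 ^- 2) / C0 by apply: divr_ge0; [exact: expR_ge0|exact: ltW].
pose b := Num.Def.archi_bound (expR (C0 ^- 2) / C0).
have hb := archi_boundP hb0.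
exists (b + 4)%N.
move=> n hn m hm1 hm2 Delta x hx hdot kappa eta hk heta P [V ->] hPK hKP.
have hbn : (b%:R : R) <= n%:R by rewrite ler_nat; exact: leq_trans (leq_addr 4 b) hn.
have hn4 : (4 : R) <= n%:R.
  by rewrite ler_nat; exact: leq_trans (leq_addl b 4) hn.
have n0 : (0 < n)%N by rewrite -(ltr0n R); lra.
have hm0 : expR (C0 ^- 2) < m%:R.
  have : expR (C0 ^- 2) / C0 < n%:R by exact: lt_le_trans hbn.
  rewrite ltr_pdivrMr // => h; apply: (lt_le_trans _ hm1); lra.
have hm0' : 0 < (m%:R : R) by apply: lt_trans hm0; exact: expR_gt0.
have lnm : C0 ^- 2 <= ln m%:R.
  rewrite -{1}(expRK (C0 ^- 2)) ler_ln ?posrE ?expR_gt0 //; exact: ltW.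
have C02 : 0 < C0 ^- 2 by rewrite invr_gt0 exprn_gt0.
have lnm0 : 0 < ln (m%:R : R) by lra.
have eD2 : Delta ^+ 2 = C0 ^+ 2 * ln m%:R by rewrite /Delta exprMn sqr_sqrtr // ltW.
have D1 : 1 <= Delta ^+ 2.
  have e : C0 ^+ 2 * C0 ^- 2 = 1 by rewrite mulfV // expf_neq0 // gt_eqF.
  rewrite eD2 -[X in X <= _]e.
  by apply: ler_wpM2l => //; apply: exprn_ge0; exact: ltW.
have Dpos : 0 < Delta by apply: mulr_gt0 => //; rewrite sqrtr_gt0.
have D1' : 1 <= Delta by nra.
set sn := Num.sqrt (n%:R : R).
have esn : sn ^+ 2 = n%:R by rewrite sqr_sqrtr // ler0n.
have snpos : 0 < sn by rewrite sqrtr_gt0; lra.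
have sn2 : 2 <= sn by nra.
set s := sn / Delta.
have spos : 0 < s by apply: divr_gt0.
have esD : s * Delta = sn by rewrite /s mulfVK // gt_eqF.
have es2 : s ^+ 2 * Delta ^+ 2 = n%:R by rewrite -exprMn esD.
have hs_sn : s <= sn by nra.
move: heta => /andP [eta0 eta1].
have etasn : eta * sn <= 1.
  by rewrite -(mulVf (negbT (gt_eqF snpos))); apply: ler_wpM2r => //; exact: ltW.
have eta_half : eta <= 1 / 2 by nra.
have etas : eta * s <= 1 by nra.
pose rho i := dotv (x i) (x i).
have eN : forall i, rho i = normv (x i) ^+ 2.
  by move=> i; rewrite /rho /normv sqr_sqrtr // dotv_ge0.
have hrho : forall i, s ^+ 2 / 4 <= rho i /\ rho i <= 4 * s ^+ 2.
  move=> i; have /andP [h1 h2] := hx i.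
  have e1 : sn / (2 * Delta) = s / 2 by rewrite /s; field; rewrite gt_eqF.
  have e2 : 2 * sn / Delta = 2 * s by rewrite /s mulrA.
  rewrite e1 in h1; rewrite e2 in h2; rewrite eN; split; nra.
have hpos : forall i, 0 < rho i.
  by move=> i; have [h _] := hrho i; apply: lt_le_trans h; apply: divr_gt0 => //; exact: exprn_gt0.
have hdot' : forall i k, i != k -> `|dotv (x k) (x i)| <= s.
  by move=> i k hik; apply: hdot; rewrite eq_sym.
set M := Num.max kappa 1.
have M1 : 1 <= M by rewrite /M le_max lexx orbT.
have Mk : kappa <= M by rewrite /M le_max lexx.
set lam := n%:R / (96 * Delta ^+ 2 * M).
have hlam : 0 < lam by apply: divr_gt0; [rewrite ltr0n | apply: mulr_gt0 => //; [apply: mulr_gt0 => //; exact: exprn_gt0|lra]].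
have hdiv : forall y, y / lam = y * (96 * M) / s ^+ 2.
  move=> y; rewrite /lam -es2; field.
  by rewrite !gt_eqF //; try apply: exprn_gt0 => //; lra.
have hrn : forall i, rho i / n%:R <= 4.
  move=> i; rewrite ler_pdivrMr ?ltr0n //; have [_ h] := hrho i; rewrite -es2; nra.
case: (lerP 8 s) => hs8.
- pose c := s / (1 - eta).
  have ec : c * (1 - eta) = s by rewrite /c mulfVK // gt_eqF //; lra.
  have hec0 : 0 <= eta * c by apply: mulr_ge0 => //; apply: divr_ge0; lra.
  have hce : eta * c <= 2.
    have : eta * c * (1 - eta) <= 1 by rewrite -mulrA ec.
    nra.
  have hkec : 0 <= kappa * eta * c by rewrite -mulrA; apply: mulr_ge0 => //; exact: ltW.
  have hkec2 : kappa * eta * c <= 2 * kappa.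
    by rewrite -mulrA mulrC; apply: ler_wpM2r => //; exact: ltW.
  apply: (@core R n m x eta kappa c (kappa * eta * c + kappa) lam s V n0 hlam (ltW hk) hpos hdot') => //.
  + rewrite ec; lra.
  + rewrite ec; lra.
  + move=> i; rewrite hdiv ec -/(rho i).
    have [h1 _] := hrho i.
    have h12 : 12 * M <= (rho i - s) * (96 * M) / s ^+ 2.
      rewrite ler_pdivlMr; last exact: exprn_gt0.
      have hrs : s ^+ 2 / 8 <= rho i - s by nra.
      have := @ler_wpM2r _ (96 * M) ltac:(lra) _ _ hrs.
      lra.
    have := hrn i; lra.
- apply: (@core R n m x eta kappa 0 (s + kappa) lam s V n0 hlam (ltW hk) hpos hdot') => //.
  + lra.
  + lra.
  + lra.
  + move=> i; rewrite hdiv mul0r subr0 -/(rho i).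
    have [h1 _] := hrho i.
    have h12 : 24 * M <= rho i * (96 * M) / s ^+ 2.
      rewrite ler_pdivlMr; last exact: exprn_gt0.
      have := @ler_wpM2r _ (96 * M) ltac:(lra) _ _ h1.
      lra.
    have := hrn i; lra.
Qed.
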